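(* Let $m\in\mathbb{N}$, $r\ge0$, and let $\lambda$ be a nonzero real number. For all integers $l,n\ge0$, \[ D^{(r)}_{m,\lambda}(l+n,x)=\sum_{j=0}^{l}\sum_{k=0}^{n}\binom{n}{k}W^{(r)}_{m,\lambda}(l,j)\,x^{j}\,(mj-l\lambda)_{n-k,\lambda}\,D^{(r)}_{m,\lambda}(k,x) \] as polynomials in $x$; equivalently, with $a^{+}$ the boson creation operator, \[ D^{(r)}_{m,\lambda}(l+n,m a^{+})=\sum_{j=0}^{l}\sum_{k=0}^{n}\binom{n}{k}W^{(r)}_{m,\lambda}(l,j)\,m^{j}(a^{+})^{j}(mj-l\lambda)_{n-k,\lambda}D^{(r)}_{m,\lambda}(k,m a^{+}). \]
   Context: $(x)_{0,\lambda}=1$ and $(x)_{n,\lambda}=x(x-\lambda)\cdots(x-(n-1)\lambda)$ for $n\ge1$; $(x)_k=x(x-1)\cdots(x-k+1)$. For $m\in\mathbb{N}$ and $r\ge0$, the degenerate $r$-Whitney numbers of the second kind $W^{(r)}_{m,\lambda}(n,k)$ are defined by $(mx+r)_{n,\lambda}=\sum_{k=0}^{n}W^{(r)}_{m,\lambda}(n,k)m^{k}(x)_k$ ($n\ge0$), and the degenerate $r$-Dowling polynomials are $D^{(r)}_{m,\lambda}(n,x)=\sum_{k=0}^{n}W^{(r)}_{m,\lambda}(n,k)x^{k}$. *)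

(* Defs.v *)
From HB Require Import structures.
From mathcomp Require Import all_boot all_order all_algebra.
Set Implicit Arguments. Unset Strict Implicit. Unset Printing Implicit Defensive.
Import Order.TTheory GRing.Theory Num.Theory.
Local Open Scope ring_scope.

Definition dfall {R : nzRingType} (lam x : R) (n : nat) : R :=
  \prod_(i < n) (x - i%:R * lam).

Definition fall {R : nzRingType} (x : R) (k : nat) : R :=
  \prod_(i < k) (x - i%:R).

Definition is_deg_r_whitney2 {R : nzRingType} (m : nat) (r lam : R)
    (W : nat -> nat -> R) : Prop :=
  forall (n : nat) (x : R),
    dfall lam (m%:R * x + r) n = \sum_(k < n.+1) W n k * (m%:R) ^+ k * fall x k.

Definition deg_r_dowling {R : nzRingType} (W : nat -> nat -> R) (n : nat) : {poly R} :=
  \sum_(k < n.+1) W n k *: 'X^k.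

(* Main.v *)
Require Import Defs.
From HB Require Import structures.
From mathcomp Require Import all_boot all_order all_algebra.
From mathcomp Require Import ring zify.
Import Order.TTheory GRing.Theory Num.Theory.
Local Open Scope ring_scope.

Lemma fall_add (R : realFieldType) (y : R) j s :
  fall y (j + s) = fall y j * fall (y - j%:R) s.
Proof.
rewrite /fall big_split_ord /=; congr (_ * _); apply: eq_bigr => i _.
by rewrite natrD opprD addrA.
Qed.

Lemma dfall_add (R : realFieldType) (lam z : R) l n :
  dfall lam z (l + n) = dfall lam z l * dfall lam (z - l%:R * lam) n.
Proof.
rewrite /dfall big_split_ord /=; congr (_ * _); apply: eq_bigr => i _.
by rewrite natrD mulrDl opprD addrA.
Qed.

Lemma dfall_S (R : realFieldType) (lam z : R) n :
  dfall lam z n.+1 = dfall lam z n * (z - n%:R * lam).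
Proof. by rewrite /dfall big_ord_recr. Qed.

Lemma dvand (R : realFieldType) (lam a b : R) n :
  dfall lam (a + b) n =
  \sum_(k < n.+1) 'C(n, k)%:R * dfall lam a k * dfall lam b (n - k).
Proof.
elim: n => [|n IHn].
  by rewrite big_ord_recl big_ord0 /dfall !big_ord0 bin0 !mulr1 addr0.
rewrite dfall_S IHn mulr_suml.
have e1 : \sum_(k < n.+1) 'C(n, k)%:R * dfall lam a k * dfall lam b (n - k)
    * (a + b - n%:R * lam) =
  \sum_(k < n.+1) 'C(n, k)%:R * dfall lam a k.+1 * dfall lam b (n - k) +
  \sum_(k < n.+1) 'C(n, k)%:R * dfall lam a k * dfall lam b (n - k).+1.
  rewrite -big_split; apply: eq_bigr => k _ /=.
  have hk : (k <= n)%N by rewrite -ltnS.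
  rewrite !dfall_S natrB //; ring.
rewrite e1 [RHS]big_ord_recl /=.
under [X in _ = _ + X]eq_bigr => i _ do rewrite /bump leq0n add1n binS natrD !mulrDl.
rewrite big_split /= addrA [RHS]addrC; congr (_ + _).
have e2 : \sum_(k < n.+1) 'C(n, k)%:R * dfall lam a k * dfall lam b (n - k).+1
  = \sum_(k < n.+2) 'C(n, k)%:R * dfall lam a k * dfall lam b (n.+1 - k).
  rewrite [RHS]big_ord_recr /= bin_small // mul0r mul0r addr0.
  by apply: eq_bigr => k _; rewrite subSn // -ltnS.
rewrite e2 big_ord_recl /= !bin0 subn0; congr (_ + _).
Qed.
Definition E {R : realFieldType} (m : nat) (N : nat) (p : {poly R}) (y : R) : R :=
  \sum_(t < N) p`_t * (m%:R) ^+ t * fall y t.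

Lemma E0 (R : realFieldType) m N y : E m N (0 : {poly R}) y = 0.
Proof. by rewrite /E big1 // => t _; rewrite coef0 !mul0r. Qed.

Lemma ED (R : realFieldType) m N (p q : {poly R}) y :
  E m N (p + q) y = E m N p y + E m N q y.
Proof. by rewrite /E -big_split; apply: eq_bigr => t _; rewrite coefD !mulrDl. Qed.

Lemma EB (R : realFieldType) m N (p q : {poly R}) y :
  E m N (p - q) y = E m N p y - E m N q y.
Proof. by rewrite /E -sumrB; apply: eq_bigr => t _; rewrite coefB !mulrBl. Qed.

Lemma EZ (R : realFieldType) m N a (p : {poly R}) y :
  E m N (a *: p) y = a * E m N p y.
Proof. by rewrite /E mulr_sumr; apply: eq_bigr => t _; rewrite coefZ !mulrA. Qed.

Lemma Esum (R : realFieldType) m N y n (F : 'I_n -> {poly R}) :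
  E m N (\sum_(i < n) F i) y = \sum_(i < n) E m N (F i) y.
Proof.
apply: (big_morph (fun p => E m N p y)); first by move=> p q; apply: ED.
exact: E0.
Qed.

Lemma EXnM (R : realFieldType) m N j (q : {poly R}) y : (j <= N)%N ->
  E m N ('X^j * q) y = (m%:R) ^+ j * fall y j * E m (N - j) q (y - j%:R).
Proof.
move=> hj; rewrite /E.
have -> : \sum_(t < N) ('X^j * q)`_t * m%:R ^+ t * fall y t =
   \sum_(t < j + (N - j)) ('X^j * q)`_t * m%:R ^+ t * fall y t by rewrite subnKC.
rewrite big_split_ord /= big1 ?add0r; last first.
  by move=> i _; rewrite coefXnM ltn_ord !mul0r.
rewrite mulr_sumr; apply: eq_bigr => i _.
rewrite coefXnM ltnNge leq_addr /= addKn exprD fall_add; ring.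
Qed.

Lemma E_D (R : realFieldType) m (r lam : R) W M n y :
  is_deg_r_whitney2 m r lam W -> (n.+1 <= M)%N ->
  E m M (deg_r_dowling W n) y = dfall lam (m%:R * y + r) n.
Proof.
move=> hW hM; rewrite hW /E /deg_r_dowling -poly_def.
rewrite [RHS](big_ord_widen M (fun k => W n k * m%:R ^+ k * fall y k) hM) [RHS]big_mkcond.
by apply: eq_bigr => t _; rewrite coef_poly; case: ifP; rewrite ?mul0r.
Qed.

Lemma fall_nat0 (R : realFieldType) (t u : nat) : (t < u)%N -> fall (t%:R : R) u = 0.
Proof.
move=> htu; rewrite /fall (bigD1 (Ordinal htu)) //= subrr mul0r //.
Qed.

Lemma fall_nat_neq0 (R : realFieldType) (t : nat) : fall (t%:R : R) t != 0.
Proof.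
apply/prodf_neq0 => i _; rewrite -natrB ?pnatr_eq0 ?subn_eq0 -?ltnNge //.
exact: ltnW.
Qed.

Lemma E_inj (R : realFieldType) m N (d : {poly R}) : (0 < m)%N ->
  (size d <= N)%N -> (forall y, E m N d y = 0) -> d = 0.
Proof.
move=> hm hs hE; apply/polyP => t; rewrite coef0.
case: (ltnP t N) => htN; last by rewrite nth_default // (leq_trans hs).
elim/ltn_ind: t htN => t IH htN.
have := hE t%:R; rewrite /E (bigD1 (Ordinal htN)) //= big1 ?addr0.
  move/eqP; rewrite !mulf_eq0 (negbTE (fall_nat_neq0 _ _)) expf_eq0 pnatr_eq0.
  by rewrite -[m == 0%N]negbK -lt0n hm andbF !orbF => /eqP.
move=> i hi; case: (ltngtP i t) => hit.
- by rewrite IH ?mul0r // (ltn_trans hit).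
- by rewrite fall_nat0 ?mulr0.
- by move: hi; rewrite -val_eqE /= hit eqxx.
Qed.
Lemma size_D (R : realFieldType) (W : nat -> nat -> R) n :
  (size (deg_r_dowling W n) <= n.+1)%N.
Proof. by rewrite /deg_r_dowling -poly_def size_poly. Qed.

Theorem theorem3p2 (R : realFieldType) (m : nat) (r lam : R)
    (W : nat -> nat -> R) :
  (0 < m)%N -> 0 <= r -> lam != 0 ->
  is_deg_r_whitney2 m r lam W ->
  forall l n : nat,
    deg_r_dowling W (l + n) =
    \sum_(j < l.+1) \sum_(k < n.+1)
       ('C(n, k)%:R * W l j * dfall lam (j%:R * m%:R - l%:R * lam) (n - k))
         *: ('X^j * deg_r_dowling W k).
Proof.
move=> hm _ _ hW l n.
apply/eqP; rewrite -subr_eq0; apply/eqP; apply: (@E_inj R m (l + n).+1 _ hm).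
  apply: leq_trans (size_polyD _ _) _; rewrite size_polyN geq_max size_D /=.
  apply: (big_ind (fun p : {poly R} => size p <= (l + n).+1)%N); first by rewrite size_poly0.
    by move=> p q hp hq; apply: leq_trans (size_polyD _ _) _; rewrite geq_max hp.
  move=> j _; apply: (big_ind (fun p : {poly R} => size p <= (l + n).+1)%N); first by rewrite size_poly0.
    by move=> p q hp hq; apply: leq_trans (size_polyD _ _) _; rewrite geq_max hp.
  move=> k _; apply: leq_trans (size_scale_leq _ _) _.
  apply: leq_trans (size_polyMleq _ _) _; rewrite size_polyXn.
  rewrite addSn /= -addnS; apply: leq_add; first by rewrite -ltnS.
  exact: leq_trans (@size_D _ W k) (ltn_ord k).
move=> y; rewrite EB (@E_D _ _ _ _ _ _ _ _ hW) // Esum; apply/eqP; rewrite subr_eq0; apply/eqP.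
have -> : \sum_(j < l.+1) E m (l + n).+1 (\sum_(k < n.+1)
       ('C(n, k)%:R * W l j * dfall lam (j%:R * m%:R - l%:R * lam) (n - k))
         *: ('X^j * deg_r_dowling W k)) y =
  \sum_(j < l.+1) \sum_(k < n.+1)
       ('C(n, k)%:R * W l j * dfall lam (j%:R * m%:R - l%:R * lam) (n - k)) *
       (m%:R ^+ j * fall y j * dfall lam (m%:R * (y - j%:R) + r) k).
  apply: eq_bigr => j _; rewrite Esum; apply: eq_bigr => k _.
  have hj : (j <= (l + n).+1)%N.
    by have := ltn_ord j; lia.
  rewrite EZ EXnM // (@E_D _ _ _ _ _ _ _ _ hW) //.
  by have := ltn_ord j; have := ltn_ord k; lia.
rewrite dfall_add hW mulr_suml; apply: eq_bigr => j _.
have -> : m%:R * y + r - l%:R * lam =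
   (m%:R * (y - j%:R) + r) + (j%:R * m%:R - l%:R * lam) by ring.
rewrite dvand mulr_sumr; apply: eq_bigr => k _; ring.
Qed.
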